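(* The set ${\operatorname{\mathsf{TPD}}}_{n}(\mathbb{S}_{\max}^\vee)$ is equal to the set \[ \{A=(a_{ij}) \in (\mathbb{S}_{\max}^{\vee})^{n \times n} : \mathbf{0} < a_{ii}\; \forall i \in [n],\; a_{ij}=a_{ji} \;\text{and}\; a_{ij}^{ 2} < a_{ii} a_{jj}\; \forall i,j \in [n], i \neq j\}\enspace . \]
   Context: $\mathbb{S}_{\max}$ is the symmetrized tropical semiring over a divisible totally ordered abelian group, with zero $\mathbf{0}$, unit $\mathbf{1}$, minus $\ominus$; $\mathbb{S}_{\max}^\vee$ is the set of signed elements (positive, negative or $\mathbf{0}$), $\mathbb{S}_{\max}^\oplus$ the set of positive elements together with $\mathbf{0}$. For $a,b\in\mathbb{S}_{\max}$, $a<b$ iff $b\ominus a\in\mathbb{S}_{\max}^\oplus\setminus\{\mathbf{0}\}$. ${\operatorname{\mathsf{TPD}}}_n(\mathbb{S}_{\max}^\vee)$ is the set of symmetric matrices $A\in(\mathbb{S}_{\max}^\vee)^{n\times n}$ such that $\mathbf{0}<x^TAx$ for all $x\in(\mathbb{S}_{\max}^\vee)^n\setminus\{\mathbf{0}\}$. *)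

(* Defs.v *)
From mathcomp Require Import all_boot all_algebra.
Set Implicit Arguments. Unset Strict Implicit. Unset Printing Implicit Defensive.
Import GRing.Theory.
Local Open Scope ring_scope.

(* The value group: an additive abelian group G (written additively; the
   tropical product is the group law) with a boolean relation [le] that is a
   translation-invariant total order, and G is divisible. *)
Definition divisible_tot_ordered_group (G : zmodType) (le : rel G) : Prop :=
  [/\ (forall a, le a a),
      (forall a b, le a b -> le b a -> a = b),
      (forall a b c, le a b -> le b c -> le a c) &
      (forall a b, le a b || le b a)] /\
  (forall a b c, le a b -> le (a + c) (b + c)) /\
  (forall (g : G) (k : nat), (0 < k)%N -> exists h : G, h *+ k = g).

(* Elements of the symmetrized tropical semiring S_max over G:
   zero, positive  g (= ⊕g), negative g (= ⊖g), balanced g (= g^•). *)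
Inductive Smax (G : Type) : Type :=
| SZero : Smax G
| SPos : G -> Smax G
| SNeg : G -> Smax G
| SBal : G -> Smax G.
Arguments SZero {G}.

Section SmaxOps.
Variables (G : zmodType) (le : rel G).

Definition smod (x : Smax G) : G :=
  match x with SZero => 0 | SPos g => g | SNeg g => g | SBal g => g end.

Definition sone : Smax G := SPos 0.

Definition sopp (x : Smax G) : Smax G :=
  match x with
  | SZero => SZero | SPos g => SNeg g | SNeg g => SPos g | SBal g => SBal g
  end.

Definition same_kind (x y : Smax G) : bool :=
  match x, y with
  | SPos _, SPos _ | SNeg _, SNeg _ | SBal _, SBal _ => true
  | _, _ => false
  end.

Definition sadd (x y : Smax G) : Smax G :=
  match x, y with
  | SZero, _ => y
  | _, SZero => x
  | _, _ =>
    let g := smod x in let h := smod y in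
    if g == h then (if same_kind x y then x else SBal g)
    else if le g h then y else x
  end.

Definition smul (x y : Smax G) : Smax G :=
  match x, y with
  | SZero, _ | _, SZero => SZero
  | SBal g, _ => SBal (g + smod y)
  | _, SBal h => SBal (smod x + h)
  | SPos g, SPos h | SNeg g, SNeg h => SPos (g + h)
  | SPos g, SNeg h | SNeg g, SPos h => SNeg (g + h)
  end.

Definition ssub (x y : Smax G) : Smax G := sadd x (sopp y).

(* S_max^vee : signed elements (positive, negative or zero) *)
Definition is_signed (x : Smax G) : bool :=
  match x with SBal _ => false | _ => true end.

Definition is_pos_nonzero (x : Smax G) : bool :=
  match x with SPos _ => true | _ => false end.

Definition slt (a b : Smax G) : bool := is_pos_nonzero (ssub b a).

Definition quad_form (n : nat) (A : 'M[Smax G]_n) (x : 'I_n -> Smax G)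
  : Smax G :=
  \big[sadd/SZero]_(i < n) \big[sadd/SZero]_(j < n)
     smul (smul (x i) (A i j)) (x j).

Definition TPD (n : nat) (A : 'M[Smax G]_n) : Prop :=
  (forall i j, is_signed (A i j)) /\
  (forall i j, A i j = A j i) /\
  (forall x : 'I_n -> Smax G,
     (forall i, is_signed (x i)) -> (exists i, x i <> SZero) ->
     slt SZero (quad_form A x)).

End SmaxOps.

(* Main.v *)
Set Warnings "-notation-overridden -ambiguous-paths".
Require Import Defs.
From mathcomp Require Import all_boot all_algebra.
Local Open Scope ring_scope.
Import GRing.Theory.

Section Aux.
Variables (G : zmodType) (le : rel G).
Hypotheses (lerr : forall a, le a a)
  (leanti : forall a b, le a b -> le b a -> a = b)
  (letr : forall a b c, le a b -> le b c -> le a c)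
  (letot : forall a b, le a b || le b a)
  (leD : forall a b c, le a b -> le (a + c) (b + c))
  (hdiv : forall (g : G) (k : nat), (0 < k)%N -> exists h : G, h *+ k = g).

Lemma big_ideal (I : eqType) (r : seq I) (P : pred I) (F : I -> Smax G)
  (S T : Smax G -> Prop) :
  S SZero -> (forall x y, S x -> S y -> S (sadd le x y)) ->
  (forall x y, T x -> S y -> T (sadd le x y) /\ T (sadd le y x)) ->
  (forall i, P i -> S (F i)) ->
  S (\big[sadd le/SZero]_(i <- r | P i) F i) /\
  (forall i, i \in r -> P i -> T (F i) ->
     T (\big[sadd le/SZero]_(i <- r | P i) F i)).
Proof.
move=> S0 SD TD SF; elim: r => [|a r [IH1 IH2]].
  by rewrite big_nil; split=> // i; rewrite in_nil.
rewrite big_cons; case: ifP => Pa.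
  split; first by apply: SD => //; apply: SF.
  move=> i; rewrite in_cons => /orP [/eqP -> _ Ta|ir Pi Ti].
    by apply: (TD _ _ Ta IH1).1.
  by apply: (TD _ _ (IH2 i ir Pi Ti) (SF _ Pa)).2.
split=> // i; rewrite in_cons => /orP [/eqP -> |]; first by rewrite Pa.
exact: IH2.
Qed.

Lemma leDD {a b c d} : le a b -> le c d -> le (a + c) (b + d).
Proof.
move=> h1 h2; apply: letr (leD _ _ c h1) _.
by rewrite ![_ + d]addrC [b + c]addrC; apply: leD.
Qed.

Lemma le_cancel a b c : le (a + c) (b + c) -> le a b.
Proof. by move/(leD _ _ (- c)); rewrite !addrK. Qed.

Lemma nle_le {a b} : ~~ le a b -> le b a.
Proof. by move=> h; move: (letot a b); rewrite (negbTE h). Qed.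

Lemma le2 a b : le (a + a) (b + b) -> le a b.
Proof.
move=> h; apply/negP => /negP nab.
have hba := nle_le nab.
have h1 : le (b + b) (a + b) by apply: leD.
have h2 : le (a + b) (a + a) by rewrite ![a + _]addrC; apply: leD.
have e1 : a + a = b + b by apply: leanti => //; apply: letr h1 h2.
have : a + b = b + b.
  apply: leanti => //; by rewrite -e1.
by move/addIr => eab; rewrite eab lerr in nab.
Qed.

Definition nz (s : Smax G) : bool := if s is SZero then false else true.

Lemma nz0 {s} : ~~ nz s -> s = SZero.
Proof. by case: s. Qed.

Lemma smulx0 x : smul x (@SZero G) = SZero.
Proof. by case: x. Qed.

Lemma slt0 x : slt le SZero x = is_pos_nonzero x.
Proof. by case: x. Qed.

Lemma slt_pos p q : slt le (SPos p) (SPos q) = (q != p) && ~~ le q p.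
Proof. by rewrite /slt /ssub /=; case: eqP => //= _; case: (le q p). Qed.

Lemma sadd_idem x : sadd le x x = x.
Proof. by case: x => //= g; rewrite eqxx. Qed.

Lemma exists_max (I : eqType) (w : I -> G) (Q : pred I) (s : seq I) :
  has Q s -> exists i0, Q i0 /\ forall i, i \in s -> Q i -> le (w i) (w i0).
Proof.
elim: s => [//|a s IH] /=.
case: (boolP (has Q s)) => hs.
  case: (IH hs) => i0 [Qi0 Hi0] _.
  case Qa: (Q a); last first.
    exists i0; split=> // i; rewrite in_cons => /orP [/eqP ->|]; first by rewrite Qa.
    exact: Hi0.
  case: (boolP (le (w a) (w i0))) => hai.
    exists i0; split=> // i; rewrite in_cons => /orP [/eqP -> //|]; exact: Hi0.
  exists a; split=> // i; rewrite in_cons => /orP [/eqP -> _ //|iS Qi].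
  apply: letr (Hi0 _ iS Qi) (nle_le hai).
rewrite orbF => Qa; exists a; split=> // i; rewrite in_cons => /orP [/eqP -> _ //|iS Qi].
by move/hasP: hs => []; exists i.
Qed.


Definition SP (M : G) (s : Smax G) : Prop :=
  s = SZero \/ s = SPos M \/ ~~ le M (smod s).

Lemma sadd_x0 x : sadd le x SZero = x.
Proof. by case: x. Qed.

Lemma SP_add M x y : SP M x -> SP M y -> SP M (sadd le x y).
Proof.
move=> [->|[->|Hx]]; first by [].
{ move=> [->|[->|Hy]]; first by [right; left].
    by rewrite sadd_idem; right; left.
  have nMy : smod y != M by apply/eqP=> e; rewrite e lerr in Hy.
  case: y Hy nMy => [|h|h|h] /= Hy nMy; try by right; left.
  all: by rewrite eq_sym (negbTE nMy) (negbTE Hy); right; left. }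
move=> [->|[->|Hy]]; first by rewrite sadd_x0; right; right.
{ have nMx : smod x != M by apply/eqP=> e; rewrite e lerr in Hx.
  have lxM : le (smod x) M by apply: nle_le.
  case: x Hx nMx lxM => [|g|g|g] /= Hx nMx lxM; try by right; left.
  all: by rewrite (negbTE nMx) lxM; right; left. }
case: x Hx => [|g|g|g] /= Hx; first by right; right.
all: case: y Hy => [|h|h|h] /= Hy; try by right; right.
all: by case: eqP => _; repeat case: ifP => _; right; right.
Qed.

Lemma TP_add M y : SP M y ->
  sadd le (SPos M) y = SPos M /\ sadd le y (SPos M) = SPos M.
Proof.
move=> [->|[->|Hy]]; first by [].
  by rewrite sadd_idem.
have nMy : smod y != M by apply/eqP=> e; rewrite e lerr in Hy.
have lyM : le (smod y) M by apply: nle_le.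
case: y Hy nMy lyM => [|h|h|h] /= Hy nMy lyM; try by [].
all: by rewrite eq_sym (negbTE nMy) (negbTE Hy) lyM.
Qed.

Lemma ac1 (u a v b : G) : (u + a + u) + (v + b + v) = (a + b) + ((u + u) + (v + v)).
Proof. rewrite [u + a]addrC -!addrA; congr (_ + _).
by rewrite [v + (b + v)]addrCA [u + (b + _)]addrCA addrCA. Qed.
Lemma ac2 (u g v : G) : (u + g + v) + (u + g + v) = (g + g) + ((u + u) + (v + v)).
Proof. rewrite [u + g]addrC -!addrA; congr (_ + _).
by rewrite [v + (g + _)]addrCA addrCA [v + (u + v)]addrCA. Qed.

Lemma smul3_mod a b c : is_signed a -> is_signed b -> is_signed c ->
  nz a -> nz b -> nz c -> smod (smul (smul a b) c) = smod a + smod b + smod c.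
Proof. by case: a => // ?; case: b => // ?; case: c. Qed.

Lemma smul_sq c : is_signed c -> nz c -> smul c c = SPos (smod c + smod c).
Proof. by case: c. Qed.

Lemma smul_diag c a : is_signed c -> nz c ->
  smul (smul c (SPos a)) c = SPos (smod c + a + smod c).
Proof. by case: c. Qed.

Lemma rhs_tpd n (A : 'M[Smax G]_n) : (forall i j, is_signed (A i j)) ->
  (forall i, slt le SZero (A i i)) ->
  (forall i j, i != j -> A i j = A j i /\
      slt le (smul (A i j) (A i j)) (smul (A i i) (A j j))) -> TPD le A.
Proof.
move=> Hs Hd Ho; split=> //; split.
  by move=> i j; case: (eqVneq i j) => [->//|/Ho []].
move=> x xs [k xk].
have Hdi : forall i, exists a, A i i = SPos a.
  by move=> i; move: (Hd i); rewrite slt0; case: (A i i) => // a; exists a.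
pose w i := smod (x i) + smod (A i i) + smod (x i).
have [i0 [nzi0 Hi0]] : exists i0, nz (x i0) /\
    forall i, i \in index_enum 'I_n -> nz (x i) -> le (w i) (w i0).
  apply: exists_max; apply/hasP; exists k; first exact: mem_index_enum.
  by move: xk; case: (x k).
set M := w i0.
have Hwi : forall i, nz (x i) -> smul (smul (x i) (A i i)) (x i) = SPos (w i).
  move=> i nzi; have [a Ha] := Hdi i; rewrite /w Ha smul_diag //.
have Hterm : forall i j, SP M (smul (smul (x i) (A i j)) (x j)).
  move=> i j.
  have [nzi|zi] := boolP (nz (x i)); last by rewrite (nz0 zi); left.
  have [nzj|zj] := boolP (nz (x j)); last first.
    by rewrite (nz0 zj) smulx0; left.
  have [nza|za] := boolP (nz (A i j)); last first.
    by rewrite (nz0 za) smulx0; left.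
  case: (eqVneq i j) => [eij|nij].
    subst j; rewrite Hwi //.
    have le1 := Hi0 i (mem_index_enum _) nzi.
    case: (eqVneq (w i) M) => [->|ne]; first by right; left.
    right; right => /=; apply/negP => h; by rewrite (leanti _ _ le1 h) eqxx in ne.
  have [_ Hlt] := Ho i j nij.
  have [a Ha] := Hdi i; have [b Hb] := Hdi j.
  rewrite Ha Hb smul_sq // slt_pos /= in Hlt; case/andP: Hlt => _ Hlt.
  right; right; rewrite smul3_mod //.
  apply/negP => hM.
  have h1 := Hi0 i (mem_index_enum _) nzi.
  have h2 := Hi0 j (mem_index_enum _) nzj.
  have := letr _ _ _ (leDD h1 h2) (leDD hM hM).
  rewrite /w Ha Hb /= ac1 ac2 => /le_cancel; apply/negP.
  by rewrite (negbTE Hlt).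
have SP0 : SP M SZero by left.
have TPadd : forall x y, x = SPos M -> SP M y ->
    sadd le x y = SPos M /\ sadd le y x = SPos M.
  by move=> ? y -> hy; apply: TP_add.
have HF : forall i, SP M (\big[sadd le/SZero]_(j < n) smul (smul (x i) (A i j)) (x j)).
  move=> i; exact: (proj1 (big_ideal _ (index_enum 'I_n) xpredT
     (fun j => smul (smul (x i) (A i j)) (x j)) (SP M) (eq^~ (SPos M))
     SP0 (@SP_add M) TPadd (fun j _ => Hterm i j))).
rewrite slt0 /quad_form.
rewrite (proj2 (big_ideal _ (index_enum 'I_n) xpredT
     (fun i => \big[sadd le/SZero]_(j < n) smul (smul (x i) (A i j)) (x j))
     (SP M) (eq^~ (SPos M)) SP0 (@SP_add M) TPadd (fun i _ => HF i)) i0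
     (mem_index_enum _) isT) //.
rewrite (proj2 (big_ideal _ (index_enum 'I_n) xpredT
     (fun j => smul (smul (x i0) (A i0 j)) (x j)) (SP M) (eq^~ (SPos M))
     SP0 (@SP_add M) TPadd (fun j _ => Hterm i0 j)) i0 (mem_index_enum _) isT) //.
exact: Hwi.
Qed.

Ltac solve_disj := repeat (first [by left | right]); try done.

Lemma single n (A : 'M[Smax G]_n) i (x : 'I_n -> Smax G) v :
  (forall k, k != i -> x k = SZero) ->
  smul (smul (x i) (A i i)) (x i) = v -> sadd le v v = v ->
  quad_form le A x = v.
Proof.
move=> x0 xi vv.
pose S1 s := s = SZero \/ s = v.
have S0 : S1 SZero by left.
have Sadd : forall a b, S1 a -> S1 b -> S1 (sadd le a b).
  move=> a b [->|->] [->|->] //=; rewrite ?sadd_x0 ?vv; solve_disj.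
have Tadd : forall a b, a = v -> S1 b -> sadd le a b = v /\ sadd le b a = v.
  by move=> a b -> [->|->]; rewrite ?sadd_x0 ?vv.
have Hterm : forall k l, S1 (smul (smul (x k) (A k l)) (x l)).
  move=> k l; case: (eqVneq k i) => [->|nk]; last by rewrite x0 //; left.
  case: (eqVneq l i) => [->|nl]; last by rewrite (x0 l) // smulx0; left.
  by right.
have HF : forall k, S1 (\big[sadd le/SZero]_(l < n) smul (smul (x k) (A k l)) (x l)).
  move=> k; exact: (proj1 (big_ideal _ (index_enum 'I_n) xpredT
     (fun l => smul (smul (x k) (A k l)) (x l)) S1 (eq^~ v)
     S0 Sadd Tadd (fun l _ => Hterm k l))).
rewrite /quad_form.
rewrite (proj2 (big_ideal _ (index_enum 'I_n) xpredT
     (fun k => \big[sadd le/SZero]_(l < n) smul (smul (x k) (A k l)) (x l))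
     S1 (eq^~ v) S0 Sadd Tadd (fun k _ => HF k)) i
     (mem_index_enum _) isT) //.
by rewrite (proj2 (big_ideal _ (index_enum 'I_n) xpredT
     (fun l => smul (smul (x i) (A i l)) (x l)) S1 (eq^~ v)
     S0 Sadd Tadd (fun l _ => Hterm i l)) i (mem_index_enum _) isT).
Qed.

Definition S2 (m c : G) (s : Smax G) : Prop :=
  s = SZero \/ s = SPos m \/ s = SNeg c \/ s = SBal c.
Definition T2 (c : G) (s : Smax G) : Prop := s = SNeg c \/ s = SBal c.

Lemma S2_add m c x y : le m c -> S2 m c x -> S2 m c y -> S2 m c (sadd le x y).
Proof.
move=> hle hx hy; case: (eqVneq m c) => [e|ne].
  subst m; case: hx => [->|[->|[->|->]]]; first by [];
  case: hy => [->|[->|[->|->]]] /=; rewrite ?eqxx /=; solve_disj.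
have e1 : (m == c) = false by apply/negbTE.
have e2 : (c == m) = false by rewrite eq_sym e1.
have l2 : le c m = false.
  by apply/negbTE/negP => h; rewrite (leanti _ _ hle h) eqxx in e1.
case: hx => [->|[->|[->|->]]]; first by [];
case: hy => [->|[->|[->|->]]] /=; rewrite ?eqxx ?e1 ?e2 ?hle ?l2 /=; solve_disj.
Qed.

Lemma T2_add m c x y : le m c -> T2 c x -> S2 m c y ->
  T2 c (sadd le x y) /\ T2 c (sadd le y x).
Proof.
move=> hle hx hy; case: (eqVneq m c) => [e|ne].
  subst m; case: hx => [->|->];
  case: hy => [->|[->|[->|->]]] /=; rewrite ?eqxx /=; split; solve_disj.
have e1 : (m == c) = false by apply/negbTE.
have e2 : (c == m) = false by rewrite eq_sym e1.
have l2 : le c m = false.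
  by apply/negbTE/negP => h; rewrite (leanti _ _ hle h) eqxx in e1.
case: hx => [->|->];
case: hy => [->|[->|[->|->]]] /=; rewrite ?eqxx ?e1 ?e2 ?hle ?l2 /=; split; solve_disj.
Qed.

Lemma not_pd n (A : 'M[Smax G]_n) i j (x : 'I_n -> Smax G) m c :
  i != j -> le m c -> (forall k, k != i -> k != j -> x k = SZero) ->
  smul (smul (x i) (A i i)) (x i) = SPos m ->
  smul (smul (x j) (A j j)) (x j) = SPos m ->
  smul (smul (x i) (A i j)) (x j) = SNeg c ->
  smul (smul (x j) (A j i)) (x i) = SNeg c ->
  T2 c (quad_form le A x).
Proof.
move=> nij hle x0 Hii Hjj Hij Hji.
have S0 : S2 m c SZero by left.
have Sadd : forall a b, S2 m c a -> S2 m c b -> S2 m c (sadd le a b).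
  by move=> a b; apply: S2_add.
have Tadd : forall a b, T2 c a -> S2 m c b -> T2 c (sadd le a b) /\ T2 c (sadd le b a).
  by move=> a b; apply: T2_add.
have Hterm : forall k l, S2 m c (smul (smul (x k) (A k l)) (x l)).
  { move=> k l.
  case: (eqVneq l i) => [->|nli]; last case: (eqVneq l j) => [->|nlj]; last by rewrite (x0 l) // smulx0; left.
  all: case: (eqVneq k i) => [->|nki]; last case: (eqVneq k j) => [->|nkj]; last by rewrite x0 //; left.
  all: rewrite ?Hii ?Hij ?Hji ?Hjj; solve_disj. }
have HF : forall k, S2 m c (\big[sadd le/SZero]_(l < n) smul (smul (x k) (A k l)) (x l)).
  move=> k; exact: (proj1 (big_ideal _ (index_enum 'I_n) xpredT
     (fun l => smul (smul (x k) (A k l)) (x l)) (S2 m c) (T2 c)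
     S0 Sadd Tadd (fun l _ => Hterm k l))).
rewrite /quad_form.
apply: (proj2 (big_ideal _ (index_enum 'I_n) xpredT
     (fun k => \big[sadd le/SZero]_(l < n) smul (smul (x k) (A k l)) (x l))
     (S2 m c) (T2 c) S0 Sadd Tadd (fun k _ => HF k)) i
     (mem_index_enum _) isT).
apply: (proj2 (big_ideal _ (index_enum 'I_n) xpredT
     (fun l => smul (smul (x i) (A i l)) (x l)) (S2 m c) (T2 c)
     S0 Sadd Tadd (fun l _ => Hterm i l)) j (mem_index_enum _) isT).
by rewrite /= Hij; left.
Qed.

Lemma contra2 n (A : 'M[Smax G]_n) i j a b g d xj :
  (forall x : 'I_n -> Smax G, (forall i, is_signed (x i)) ->
     (exists i, x i <> SZero) -> slt le SZero (quad_form le A x)) ->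
  i != j -> A i i = SPos a -> A j j = SPos b -> A j i = A i j ->
  d + d = b - a -> le (a + b) (g + g) -> is_signed xj -> nz xj ->
  smul (smul (SPos d) (A i j)) xj = SNeg (d + g) ->
  smul (smul xj (A i j)) (SPos d) = SNeg (d + g) ->
  smul (smul xj (SPos b)) xj = SPos b -> False.
Proof.
move=> Hq nij Ha Hb Hsym hd hle xs xnz Hij Hji Hjj.
pose x k := if k == i then SPos d else if k == j then xj else SZero.
have xsig : forall k, is_signed (x k).
  by move=> k; rewrite /x; case: ifP => //; case: ifP.
have xnz' : exists k, x k <> SZero by exists i; rewrite /x eqxx.
have := Hq x xsig xnz'.
have nji : (j == i) = false by rewrite eq_sym; apply/negbTE.
have hbc : le b (d + g).
  apply: le2.
  have -> : b + b = (a + b) + (d + d) by rewrite hd [RHS]addrC addrA subrK.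
  have -> : (d + g) + (d + g) = (g + g) + (d + d) by rewrite addrACA addrC.
  exact: leD.
have H1 : forall k, k != i -> k != j -> x k = SZero.
  by move=> k /negbTE nki /negbTE nkj; rewrite /x nki nkj.
have H2 : smul (smul (x i) (A i i)) (x i) = SPos b.
  rewrite /x eqxx Ha /=; congr SPos.
  by rewrite addrAC hd subrK.
have H3 : smul (smul (x j) (A j j)) (x j) = SPos b by rewrite /x nji eqxx Hb.
have H4 : smul (smul (x i) (A i j)) (x j) = SNeg (d + g) by rewrite /x nji !eqxx.
have H5 : smul (smul (x j) (A j i)) (x i) = SNeg (d + g) by rewrite /x nji !eqxx Hsym.
by have [->|->] := @not_pd n A i j x b (d + g) nij hbc H1 H2 H3 H4 H5.
Qed.

Lemma tpd_rhs n (A : 'M[Smax G]_n) : TPD le A ->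
  ((forall i j, is_signed (A i j)) /\
   (forall i, slt le SZero (A i i)) /\
   (forall i j, i != j ->
      A i j = A j i /\
      slt le (smul (A i j) (A i j)) (smul (A i i) (A j j)))).
Proof.
move=> [Hs [Hsym Hq]].
have Hd : forall i, slt le SZero (A i i).
  move=> i; pose x k := if k == i then SPos (0:G) else SZero.
  have xs : forall k, is_signed (x k) by move=> k; rewrite /x; case: ifP.
  have xnz : exists k, x k <> SZero by exists i; rewrite /x eqxx.
  have := Hq x xs xnz.
  rewrite (@single n A i x (A i i)) //.
  - by move=> k /negbTE; rewrite /x => ->.
  - rewrite /x eqxx; move: (Hs i i); case: (A i i) => //= g _;
    by rewrite add0r addr0.
  - exact: sadd_idem.
split=> //; split=> // i j nij; split; first exact: Hsym.
have [a Ha] : exists a, A i i = SPos a.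
  by move: (Hd i); rewrite slt0; case: (A i i) => // a; exists a.
have [b Hb] : exists a, A j j = SPos a.
  by move: (Hd j); rewrite slt0; case: (A j j) => // b0; exists b0.
rewrite Ha Hb /=.
have [d hd] := hdiv (b - a) 2 isT.
rewrite mulr2n in hd.
case Eij: (A i j) (Hs i j) => [|g|g|g] //= _.
- rewrite slt_pos.
  suff H : ~~ le (a + b) (g + g).
    by rewrite H andbT; apply/eqP => e; rewrite e lerr in H.
  apply/negP => hle.
  apply: (@contra2 n A i j a b g d (SNeg 0) Hq nij Ha Hb (Hsym j i) hd hle) => //.
  + by rewrite Eij /= addr0.
  + by rewrite Eij /= add0r addrC.
  + by rewrite /= add0r addr0.
- rewrite slt_pos.
  suff H : ~~ le (a + b) (g + g).
    by rewrite H andbT; apply/eqP => e; rewrite e lerr in H.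
  apply/negP => hle.
  apply: (@contra2 n A i j a b g d (SPos 0) Hq nij Ha Hb (Hsym j i) hd hle) => //.
  + by rewrite Eij /= addr0.
  + by rewrite Eij /= add0r addrC.
  + by rewrite /= add0r addr0.
Qed.

End Aux.

Theorem theorem4p3 (G : zmodType) (le : rel G)
    (HG : divisible_tot_ordered_group le) (n : nat) (A : 'M[Smax G]_n) :
  TPD le A <->
  ((forall i j, is_signed (A i j)) /\
   (forall i, slt le SZero (A i i)) /\
   (forall i j, i != j ->
      A i j = A j i /\
      slt le (smul (A i j) (A i j)) (smul (A i i) (A j j)))).
Proof.
case: HG => [[lerr leanti letr letot] [leD hdiv]].
split; first exact: (@tpd_rhs G le lerr leanti letr letot leD hdiv).
move=> [Hs [Hd Ho]]; exact: (@rhs_tpd G le lerr leanti letr letot leD n A Hs Hd Ho).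
Qed.
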